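(* Let $0<a\le b$. For $\mathbf v_c\in[a,b]^4$ let $\mathbf p_c$ be the unique maximizer of $L_{\mathbf v_c}$ over the simplex $\Delta$, and define $$R_{\max}(c)=\max_{\mathbf v_t\in[a,b]^4}\left[1-\left(\frac{L_{\mathbf v_t}(\mathbf p_c)}{\max_{\mathbf p\in\Delta}L_{\mathbf v_t}(\mathbf p)}\right)^{1/3}\right].$$ Then, as $\mathbf v_c$ ranges over $[a,b]^4$, $R_{\max}(c)$ attains its minimum if and only if $\mathbf p_c=(1/4,1/4,1/4,1/4)$, the uniform design.
   Context: Setting: a $2^2$ experiment with binary response under a generalized linear model with main-effects linear predictor $\eta=\beta_0+\beta_1x_1+\beta_2x_2$. A design is a vector $\mathbf p=(p_1,p_2,p_3,p_4)$ in the simplex $\Delta=\{p_i\ge0,\ \sum_i p_i=1\}$. With $w_i>0$ the GLM weights at the four design points and $v_i=1/w_i$, the $D$-criterion equals $16w_1w_2w_3w_4L_{\mathbf v}(\mathbf p)$ where $$L_{\mathbf v}(\mathbf p)=v_4p_1p_2p_3+v_3p_1p_2p_4+v_2p_1p_3p_4+v_1p_2p_3p_4 .$$ For every $\mathbf v$ with positive entries, $L_{\mathbf v}$ has a unique maximizer on $\Delta$ (the locally $D$-optimal design). $\mathbf v_c$ is the assumed value, $\mathbf v_t$ the true value, and the bracketed quantity is the relative loss of efficiency of using $\mathbf p_c$ when $\mathbf v_t$ is true; $R_{\max}(c)$ is a function of $\mathbf p_c$ only. *)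

(* Defs.v *)
From mathcomp Require Import all_boot all_order all_algebra.
From mathcomp Require Import boolp classical_sets reals exp.
Set Implicit Arguments. Unset Strict Implicit. Unset Printing Implicit Defensive.
Import Order.TTheory GRing.Theory Num.Theory.
Local Open Scope ring_scope.
Local Open Scope classical_set_scope.

(* Indices 1..4 of the paper are 0..3 here. *)
Definition i1 : 'I_4 := @Ordinal 4 0 isT.
Definition i2 : 'I_4 := @Ordinal 4 1 isT.
Definition i3 : 'I_4 := @Ordinal 4 2 isT.
Definition i4 : 'I_4 := @Ordinal 4 3 isT.

Section Defs.
Variable R : realType.

Definition in_simplex (p : 'I_4 -> R) : Prop :=
  (forall i, 0 <= p i) /\ \sum_(i < 4) p i = 1.

Definition in_box (a b : R) (v : 'I_4 -> R) : Prop :=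
  forall i, a <= v i <= b.

Definition Lv (v p : 'I_4 -> R) : R :=
  v i4 * p i1 * p i2 * p i3 + v i3 * p i1 * p i2 * p i4
  + v i2 * p i1 * p i3 * p i4 + v i1 * p i2 * p i3 * p i4.

Definition is_maximizer (v p : 'I_4 -> R) : Prop :=
  in_simplex p /\ forall q, in_simplex q -> Lv v q <= Lv v p.

Definition Lmax (v : 'I_4 -> R) : R := sup [set Lv v p | p in in_simplex].

Definition rel_loss (pc vt : 'I_4 -> R) : R :=
  1 - powR (Lv vt pc / Lmax vt) (3%:R^-1).

(* R_max(c), a function of p_c only *)
Definition Rmax (a b : R) (pc : 'I_4 -> R) : R :=
  sup [set rel_loss pc vt | vt in in_box a b].

Definition uniform_design : 'I_4 -> R := fun _ => 4%:R^-1.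
End Defs.

(* Main.v *)
Require Import Defs.
From mathcomp Require Import all_boot all_order all_algebra.
From mathcomp Require Import boolp classical_sets reals exp.
From mathcomp Require Import ring lra.
Set Implicit Arguments. Unset Strict Implicit.
Import Order.TTheory GRing.Theory Num.Theory.
Local Open Scope ring_scope.
Local Open Scope classical_set_scope.

Section H.
Variable R : realType.
Implicit Types (v p q : 'I_4 -> R).

Lemma sum4 (q : 'I_4 -> R) : \sum_(i < 4) q i = q i1 + q i2 + q i3 + q i4.
Proof.
rewrite !big_ord_recl big_ord0 addr0 !addrA.
by congr (_+_+_+_); congr q; apply/val_inj.
Qed.

Definition sg (i : 'I_4) : 'I_4 :=
  match nat_of_ord i with 0 => i2 | 1 => i3 | 2 => i4 | _ => i1 end.
Definition tg (i : 'I_4) : 'I_4 :=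
  match nat_of_ord i with 0 => i4 | 1 => i1 | 2 => i2 | _ => i3 end.

Definition e3 q := q i1 * q i2 * q i3 + q i1 * q i2 * q i4 + q i1 * q i3 * q i4
  + q i2 * q i3 * q i4.

Lemma e3_gap (A B C D : R) : 0 <= A -> 0 <= B -> 0 <= C -> 0 <= D ->
  A + B + C + D = 1 ->
  16%:R^-1 - (A*B*C + A*B*D + A*C*D + B*C*D) =
  (A+B)*(C-D)^+2/4%:R + (C+D)*(A-B)^+2/4%:R + (A+B-C-D)^+2/16%:R.
Proof.
move=> hA hB hC hD hs.
have -> : D = 1 - A - B - C by lra.
by field.
Qed.

Lemma e3_le q : in_simplex q -> e3 q <= 16%:R^-1.
Proof.
move=> [h0 hs]; rewrite sum4 in hs.
have := h0 i1; have := h0 i2; have := h0 i3; have := h0 i4.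
move=> hD hC hB hA; rewrite /e3 -subr_ge0 e3_gap //.
have h1 : 0 <= (q i1 + q i2)*(q i3 - q i4)^+2/4%:R by apply: mulr_ge0; [apply: mulr_ge0; [lra|apply: sqr_ge0]|lra].
have h2 : 0 <= (q i3 + q i4)*(q i1 - q i2)^+2/4%:R by apply: mulr_ge0; [apply: mulr_ge0; [lra|apply: sqr_ge0]|lra].
have h3 : 0 <= (q i1 + q i2 - q i3 - q i4)^+2/16%:R by apply: mulr_ge0; [apply: sqr_ge0|lra].
lra.
Qed.

Lemma ord4_cases (P : 'I_4 -> Prop) : P i1 -> P i2 -> P i3 -> P i4 -> forall i, P i.
Proof.
move=> h1 h2 h3 h4 [[|[|[|[|n]]]] Hi].
- by have -> : Ordinal Hi = i1 by apply/val_inj.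
- by have -> : Ordinal Hi = i2 by apply/val_inj.
- by have -> : Ordinal Hi = i3 by apply/val_inj.
- by have -> : Ordinal Hi = i4 by apply/val_inj.
- by [].
Qed.

Lemma e3_lt q : in_simplex q -> q <> uniform_design R -> e3 q < 16%:R^-1.
Proof.
move=> hq hne; rewrite lt_neqAle e3_le // andbT; apply/negP => /eqP he.
apply: hne; move: hq => [h0 hs]; rewrite sum4 in hs.
have := h0 i1; have := h0 i2; have := h0 i3; have := h0 i4.
move=> hD hC hB hA.
have E := e3_gap hA hB hC hD hs.
rewrite /e3 in he; rewrite he subrr in E.
have h1 : 0 <= (q i1 + q i2)*(q i3 - q i4)^+2/4%:R by apply: mulr_ge0; [apply: mulr_ge0; [lra|apply: sqr_ge0]|lra].
have h2 : 0 <= (q i3 + q i4)*(q i1 - q i2)^+2/4%:R by apply: mulr_ge0; [apply: mulr_ge0; [lra|apply: sqr_ge0]|lra].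
have h3 : 0 <= (q i1 + q i2 - q i3 - q i4)^+2/16%:R by apply: mulr_ge0; [apply: sqr_ge0|lra].
have z3 : (q i1 + q i2 - q i3 - q i4)^+2 = 0 by lra.
move/eqP: z3; rewrite expf_eq0 /= => /eqP z3.
have z1 : (q i3 - q i4)^+2 = 0.
  have : (q i1 + q i2)*(q i3 - q i4)^+2 = 0 by lra.
  have -> : q i1 + q i2 = 2%:R^-1 by lra.
  by move/eqP; rewrite mulf_eq0 invr_eq0 pnatr_eq0 /= => /eqP.
have z2 : (q i1 - q i2)^+2 = 0.
  have : (q i3 + q i4)*(q i1 - q i2)^+2 = 0 by lra.
  have -> : q i3 + q i4 = 2%:R^-1 by lra.
  by move/eqP; rewrite mulf_eq0 invr_eq0 pnatr_eq0 /= => /eqP.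
move/eqP: z1; rewrite expf_eq0 /= => /eqP z1.
move/eqP: z2; rewrite expf_eq0 /= => /eqP z2.
apply: funext; apply: ord4_cases; rewrite /uniform_design; lra.
Qed.

Definition sv v := v \o sg.
Definition sumv v := v i1 + v i2 + v i3 + v i4.
Definition nonneg v := forall i, 0 <= v i.

Lemma Lv_sg v q : Lv (sv v) q = Lv v (q \o tg).
Proof. rewrite /Lv /sv /=; ring. Qed.

Lemma Lv_sg' v q : Lv v q = Lv (sv v) (q \o sg).
Proof. rewrite /Lv /sv /=; ring. Qed.

Lemma simplex_sg q : in_simplex q -> in_simplex (q \o sg).
Proof.
move=> [h0 hs]; split=> [i|]; first exact: h0.
by rewrite sum4 /=; rewrite sum4 in hs; lra.
Qed.

Lemma simplex_tg q : in_simplex q -> in_simplex (q \o tg).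
Proof.
move=> [h0 hs]; split=> [i|]; first exact: h0.
by rewrite sum4 /=; rewrite sum4 in hs; lra.
Qed.

Lemma mul_le1 (w x : R) : 0 <= w -> 0 <= x <= 1 -> 0 <= w * x /\ w * x <= w.
Proof. move=> hw /andP[hx0 hx1]; split; [exact: mulr_ge0|exact: ler_piMr]. Qed.

Lemma simplex_01 q : in_simplex q -> forall i, 0 <= q i <= 1.
Proof.
move=> [h0 hs]; apply: ord4_cases; rewrite sum4 in hs;
have := h0 i1; have := h0 i2; have := h0 i3; have := h0 i4;
move=> *; apply/andP; split; lra.
Qed.

Lemma term_le (w x y z : R) : 0 <= w -> 0 <= x <= 1 -> 0 <= y <= 1 -> 0 <= z <= 1 ->
  0 <= w * x * y * z /\ w * x * y * z <= w.
Proof.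
move=> hw hx hy hz.
have [a1 a2] := mul_le1 hw hx.
have [b1 b2] := mul_le1 a1 hy.
have [c1 c2] := mul_le1 b1 hz.
split=> //; lra.
Qed.

Lemma Lv_bounds v q : nonneg v -> in_simplex q -> 0 <= Lv v q /\ Lv v q <= sumv v.
Proof.
move=> hv hq; have h := simplex_01 hq.
have [t1 u1] := term_le (hv i4) (h i1) (h i2) (h i3).
have [t2 u2] := term_le (hv i3) (h i1) (h i2) (h i4).
have [t3 u3] := term_le (hv i2) (h i1) (h i3) (h i4).
have [t4 u4] := term_le (hv i1) (h i2) (h i3) (h i4).
rewrite /Lv /sumv; split; lra.
Qed.

Lemma simplex_u : in_simplex (uniform_design R).
Proof. split=> [i|]; rewrite ?sum4 /uniform_design; lra. Qed.

Lemma Lv_u v : Lv v (uniform_design R) = sumv v / 64%:R.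
Proof. rewrite /Lv /sumv /uniform_design; by field. Qed.

Lemma Lmax_ub v q : nonneg v -> in_simplex q -> Lv v q <= Lmax v.
Proof.
move=> hv hq; apply: ub_le_sup; last by exists q.
exists (sumv v) => _ [r hr <-]; exact: (Lv_bounds hv hr).2.
Qed.

Lemma Lmax_le v : nonneg v -> Lmax v <= sumv v.
Proof.
move=> hv; apply: ge_sup; first by exists (Lv v (uniform_design R)), (uniform_design R) => //; exact: simplex_u.
move=> _ [r hr <-]; exact: (Lv_bounds hv hr).2.
Qed.

Lemma nonneg_sv v : nonneg v -> nonneg (sv v).
Proof. by move=> hv i; exact: hv. Qed.

Lemma Lmax_sv v : nonneg v -> Lmax (sv v) = Lmax v.
Proof.
move=> hv; apply/le_anti/andP; split.
- apply: ge_sup; first by exists (Lv (sv v) (uniform_design R)), (uniform_design R) => //; exact: simplex_u.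
  move=> _ [r hr <-]; rewrite Lv_sg; apply: Lmax_ub => //; exact: simplex_tg.
- apply: ge_sup; first by exists (Lv v (uniform_design R)), (uniform_design R) => //; exact: simplex_u.
  move=> _ [r hr <-]; rewrite Lv_sg'; apply: Lmax_ub; [exact: nonneg_sv|exact: simplex_sg].
Qed.

Lemma shift_sum v p : Lv v p + Lv (sv v) p + Lv (sv (sv v)) p + Lv (sv (sv (sv v))) p
  = sumv v * e3 p.
Proof. rewrite /Lv /sv /sumv /e3 /=; ring. Qed.

Lemma sumv_sv v : sumv (sv v) = sumv v.
Proof. rewrite /sumv /sv /=; ring. Qed.

Lemma cube_powR (x : R) : 0 <= x -> (x `^ 3%:R^-1) ^+ 3 = x.
Proof.
move=> hx; rewrite -powR_mulrn ?powR_ge0 // -powRrM mulVf ?powRr1 //.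
by rewrite pnatr_eq0.
Qed.

Lemma cube_gap (X Y d : R) : 0 <= X -> 0 <= Y -> 0 <= d -> Y ^+ 3 + d <= X ^+ 3 -> X ^+ 3 <= 1 ->
  Y + d / 3%:R <= X.
Proof.
move=> hX hY hd h1 h2.
have hX1 : X <= 1.
  rewrite leNgt; apply/negP => hc.
  have : 1 < X ^+ 3 by rewrite expr_gt1 //; apply/orP; left.
  lra.
have hYX : Y <= X.
  rewrite leNgt; apply/negP => hc.
  have : X ^+ 3 < Y ^+ 3 by rewrite ltr_pXn2r // ?nnegrE.
  lra.
have E : X ^+ 3 - Y ^+ 3 = (X - Y) * (X ^+ 2 + X * Y + Y ^+ 2) by ring.
have : (X - Y) * (X ^+ 2 + X * Y + Y ^+ 2) <= (X - Y) * 3%:R.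
  apply: ler_wpM2l; first lra.
  have : X ^+ 2 <= 1 by rewrite expr_le1.
  have : Y ^+ 2 <= 1 by rewrite expr_le1 //; lra.
  have : X * Y <= 1 by apply: mulr_ile1 => //; lra.
  lra.
lra.
Qed.

Lemma root_gap (x y d : R) : 0 <= y -> 0 <= d -> y + d <= x -> x <= 1 ->
  y `^ 3%:R^-1 + d / 3%:R <= x `^ 3%:R^-1.
Proof.
move=> hy hd h1 h2.
apply: cube_gap; rewrite ?powR_ge0 // !cube_powR //; lra.
Qed.

Lemma box_nonneg (a b : R) v : 0 < a -> in_box a b v -> nonneg v.
Proof. move=> ha hv i; have /andP[h _] := hv i; lra. Qed.

Lemma box_sv (a b : R) v : in_box a b v -> in_box a b (sv v).
Proof. by move=> hv i; exact: hv. Qed.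

Lemma rel_loss_le1 p v : rel_loss p v <= 1.
Proof. rewrite /rel_loss; have := powR_ge0 (Lv v p / Lmax v) 3%:R^-1; lra. Qed.

Lemma Rmax_ub (a b : R) p v : in_box a b v -> rel_loss p v <= Rmax a b p.
Proof.
move=> hv; apply: ub_le_sup; last by exists v.
exists 1 => _ [w hw <-]; exact: rel_loss_le1.
Qed.

Lemma Rmax_le (a b : R) p M : a <= b ->
  (forall v, in_box a b v -> rel_loss p v <= M) -> Rmax a b p <= M.
Proof.
move=> hab hM; apply: ge_sup.
  exists (rel_loss p (fun=> a)), (fun=> a) => //.
  by move=> i; rewrite lexx hab.
by move=> _ [w hw <-]; exact: hM.
Qed.

Lemma exists_shift (a b : R) v p : 0 < a -> in_box a b v ->
  exists w, [/\ in_box a b w, Lmax w = Lmax v & Lv w p <= sumv v * e3 p / 4%:R].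
Proof.
move=> ha hv; have hn := box_nonneg ha hv.
have hn1 := nonneg_sv hn; have hn2 := nonneg_sv hn1.
have hb1 := box_sv hv; have hb2 := box_sv hb1; have hb3 := box_sv hb2.
have E := shift_sum v p.
have [h|h] := lerP (Lv v p) (sumv v * e3 p / 4%:R); first by exists v.
have [h1|h1] := lerP (Lv (sv v) p) (sumv v * e3 p / 4%:R).
  by exists (sv v); rewrite Lmax_sv.
have [h2|h2] := lerP (Lv (sv (sv v)) p) (sumv v * e3 p / 4%:R).
  by exists (sv (sv v)); rewrite !Lmax_sv.
have [h3|h3] := lerP (Lv (sv (sv (sv v))) p) (sumv v * e3 p / 4%:R).
  by exists (sv (sv (sv v))); rewrite !Lmax_sv.
exfalso; lra.
Qed.

Lemma strict_better (a b : R) p : 0 < a -> a <= b -> in_simplex p ->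
  p <> uniform_design R -> Rmax a b (uniform_design R) < Rmax a b p.
Proof.
move=> ha hab hp hne.
set d := 64%:R^-1 - e3 p / 4%:R.
have hd : 0 < d by rewrite /d; have := e3_lt hp hne; lra.
suff : Rmax a b (uniform_design R) <= Rmax a b p - d / 3%:R by lra.
apply: Rmax_le => // v hv.
have hn := box_nonneg ha hv.
have hS : 0 < sumv v.
  rewrite /sumv; have /andP[? _] := hv i1; have /andP[? _] := hv i2;
  have /andP[? _] := hv i3; have /andP[? _] := hv i4; lra.
have hLu := Lmax_ub hn simplex_u; rewrite Lv_u in hLu.
have hL : 0 < Lmax v by apply: lt_le_trans hLu; apply: divr_gt0 => //; lra.
have hLS := Lmax_le hn.
have [w [hw hLw hwp]] := exists_shift p ha hv.
have hwn := box_nonneg ha hw.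
have hy0 : 0 <= Lv w p / Lmax v by apply: divr_ge0; [exact: (Lv_bounds hwn hp).1|lra].
have hx1 : Lv v (uniform_design R) / Lmax v <= 1.
  by rewrite ler_pdivrMr // mul1r Lv_u.
have hxy : Lv w p / Lmax v + d <= Lv v (uniform_design R) / Lmax v.
  rewrite -subr_ge0.
  have -> : Lv v (uniform_design R) / Lmax v - (Lv w p / Lmax v + d) =
     (Lv v (uniform_design R) - Lv w p - d * Lmax v) / Lmax v.
    by field; rewrite gt_eqF.
  apply: divr_ge0; last lra.
  rewrite Lv_u.
  have : d * Lmax v <= d * sumv v by apply: ler_wpM2l; lra.
  have : sumv v / 64%:R = sumv v * e3 p / 4%:R + d * sumv v by rewrite /d; field.
  lra.
have := root_gap hy0 (ltW hd) hxy hx1.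
have := Rmax_ub p hw.
rewrite /rel_loss hLw; lra.
Qed.

Lemma u_feasible (a : R) : 0 <= a -> is_maximizer (fun=> a) (uniform_design R).
Proof.
move=> ha; split; first exact: simplex_u.
move=> q hq.
have -> : Lv (fun=> a) q = a * e3 q by rewrite /Lv /e3; ring.
rewrite Lv_u /sumv.
have : a * e3 q <= a * 16%:R^-1 by apply: ler_wpM2l => //; exact: e3_le.
have -> : (a + a + a + a) / 64%:R = a * 16%:R^-1 by field.
by [].
Qed.
End H.

Unset Implicit Arguments. Set Strict Implicit.
Local Close Scope classical_set_scope.

Theorem theorem3 (R : realType) (a b : R) (hab : 0 < a <= b)
    (vc pc : 'I_4 -> R) (hvc : in_box a b vc) (hpc : is_maximizer vc pc) :
  (forall (vc' pc' : 'I_4 -> R), in_box a b vc' -> is_maximizer vc' pc' ->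
     Rmax a b pc <= Rmax a b pc') <->
  pc = uniform_design R.
Proof.
case/andP: hab => ha hab'.
have hsp := hpc.1.
split.
- move=> H; have [->|hne] := pselect (pc = uniform_design R) => //.
  have h1 := H (fun=> a) (uniform_design R).
  have h2 : in_box a b (fun=> a) by move=> i; rewrite lexx hab'.
  have h3 := h1 h2 (u_feasible (ltW ha)).
  have := strict_better ha hab' hsp hne.
  by rewrite ltNge h3.
- move=> -> vc' pc' hv' hp'.
  have [->|hne] := pselect (pc' = uniform_design R) => //.
  exact: ltW (strict_better ha hab' hp'.1 hne).
Qed.
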